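(* Let $P$ be a lattice-face $d$-simplex with vertices $v_1,\dots,v_{d+1}$. For every $\sigma\in\mathfrak S_d$ and every $1\le k\le d$, $z(\sigma,k)/z(\sigma,k-1)\in\mathbb Z$, where $z(\sigma,0)=1$.
   Context: Write $v_i=(x_{i,1},\dots,x_{i,d})$. For $1\le k\le d$, $X(\sigma,k)$ is the $(k+1)\times(k+1)$ matrix with rows $(1,x_{\sigma(r),1},\dots,x_{\sigma(r),k})$, $r=1,\dots,k$, and last row $(1,x_{d+1,1},\dots,x_{d+1,k})$; $Y(\sigma,k)$ is the $k\times k$ matrix with rows $(1,x_{\sigma(r),1},\dots,x_{\sigma(r),k-1})$, $r=1,\dots,k$; $z(\sigma,k)=\det X(\sigma,k)/\det Y(\sigma,k)$ (these determinants are nonzero for lattice-face simplices). Lattice-face polytopes are defined recursively, with $\pi:\mathbb R^d\to\mathbb R^{d-1}$ forgetting the last coordinate: a segment in $\mathbb R$ is lattice-face if its endpoints are integers; for $d\ge2$, a $d$-polytope with vertex set $V$ is lattice-face if for every $d$-element $U\subset V$: (a) $\pi(\mathrm{conv}(U))$ is a lattice-face polytope in $\mathbb R^{d-1}$, and (b) $\pi(H_U\cap\mathbb Z^d)=\mathbb Z^{d-1}$, $H_U$ the affine span of $U$. *)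

(* Defs.v *)
From HB Require Import structures.
From mathcomp Require Import all_boot all_order all_algebra all_fingroup.
Set Implicit Arguments. Unset Strict Implicit. Unset Printing Implicit Defensive.
Import Order.TTheory GRing.Theory Num.Theory.
Local Open Scope ring_scope.

Section LatticeFace.
Variable R : realFieldType.

Definition integral_pt n (x : 'rV[R]_n) : Prop :=
  forall i : 'I_n, exists z : int, x 0 i = z%:~R.

Definition in_aff n (S : seq 'rV[R]_n) (x : 'rV[R]_n) : Prop :=
  exists l : 'I_(size S) -> R,
    \sum_i l i = 1 /\ x = \sum_i l i *: S`_i.

Definition in_conv n (S : seq 'rV[R]_n) (x : 'rV[R]_n) : Prop :=
  exists l : 'I_(size S) -> R,
    (forall i, 0 <= l i) /\ \sum_i l i = 1 /\ x = \sum_i l i *: S`_i.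

Definition fulldim n (S : seq 'rV[R]_n) : Prop := forall x, in_aff S x.

Definition is_vert_set n (S W : seq 'rV[R]_n) : Prop :=
  uniq W /\ forall p, p \in W <-> (p \in S /\ ~ in_conv [seq q <- S | q != p] p).

Definition proj m (x : 'rV[R]_m.+1) : 'rV[R]_m :=
  \row_(i < m) x 0 (widen_ord (leqnSn m) i).

(* lattice-face polytopes, given by their vertex set, defined recursively *)
Fixpoint lattice_face (n : nat) : seq 'rV[R]_n -> Prop :=
  match n return seq 'rV[R]_n -> Prop with
  | 0 => fun _ => False
  | m.+1 => fun S =>
    if m == 0%N then
      size S = 2%N /\ uniq S /\ (forall p, p \in S -> integral_pt p)
    else
      fulldim S /\
      forall U : seq 'rV[R]_m.+1, uniq U -> size U = m.+1 -> {subset U <= S} ->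
        (* (a) pi(conv U) is lattice-face *)
        (forall W, is_vert_set (map (@proj m) U) W -> lattice_face W) /\
        (* (b) pi(H_U cap Z^d) = Z^(d-1) *)
        (forall y : 'rV[R]_m,
           (exists x, in_aff U x /\ integral_pt x /\ proj x = y) <-> integral_pt y)
  end.

(* x_{p,j} : j-th coordinate (1-based j, here passed 0-based as j) *)
Definition coord d (p : 'rV[R]_d) (j : nat) : R :=
  odflt 0 (omap (fun i : 'I_d => p 0 i) (insub j)).

(* v_{sigma(r+1)} for 0-based r < d *)
Definition vsig d (v : 'I_d.+1 -> 'rV[R]_d) (s : 'S_d) (r : nat) : 'rV[R]_d :=
  odflt 0 (omap (fun i : 'I_d => v (widen_ord (leqnSn d) (s i))) (insub r)).

Definition Xmat d (v : 'I_d.+1 -> 'rV[R]_d) (s : 'S_d) (k : nat) : 'M[R]_k.+1 :=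
  \matrix_(r < k.+1, c < k.+1)
    if c == 0 :> nat then 1
    else coord (if (r < k)%N then vsig v s r else v ord_max) c.-1.

Definition Ymat d (v : 'I_d.+1 -> 'rV[R]_d) (s : 'S_d) (k : nat) : 'M[R]_k :=
  \matrix_(r < k, c < k) if c == 0 :> nat then 1 else coord (vsig v s r) c.-1.

Definition zfun d (v : 'I_d.+1 -> 'rV[R]_d) (s : 'S_d) (k : nat) : R :=
  if k is 0 then 1 else \det (Xmat v s k) / \det (Ymat v s k).

Definition aff_indep d (v : 'I_d.+1 -> 'rV[R]_d) : Prop :=
  \det (\matrix_(i < d.+1, j < d.+1)
          if j == 0 :> nat then 1 else coord (v i) j.-1) != 0.

End LatticeFace.

(* Main.v *)
Require Import Defs.
From HB Require Import structures.
From mathcomp Require Import all_boot all_order all_algebra all_fingroup.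
From mathcomp Require Import zify ring.
Import Order.TTheory GRing.Theory Num.Theory.
Set Implicit Arguments. Unset Strict Implicit. Unset Printing Implicit Defensive.
Local Open Scope ring_scope.
Local Notation coord := Defs.coord.

Section Gen.
Variable R : realFieldType.

Definition affP d (n : nat) (b : nat -> R) (p : 'rV[R]_d) : R :=
  b 0%N + \sum_(j < n) b j.+1 * coord p j.

Definition hmat n (f : 'I_n.+1 -> 'rV[R]_n) : 'M[R]_n.+1 :=
  \matrix_(r < n.+1, c < n.+1) if c == 0 :> nat then 1 else coord (f r) c.-1.

Definition trunc d k (p : 'rV[R]_d) : 'rV[R]_k := \row_(i < k) coord p i.

Lemma coord_ord n (p : 'rV[R]_n) (i : 'I_n) : coord p i = p 0 i.
Proof. by rewrite /coord valK. Qed.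

Lemma coord_trunc d k (p : 'rV[R]_d) j : (j < k)%N -> coord (trunc k p) j = coord p j.
Proof.
move=> hj; have -> : j = Ordinal hj by [].
by rewrite coord_ord mxE.
Qed.

Lemma affP_trunc d n (b : nat -> R) (p : 'rV[R]_d) :
  affP n b (trunc n p) = affP n b p.
Proof. by rewrite /affP; congr (_ + _); apply: eq_bigr => j _; rewrite coord_trunc. Qed.

Lemma coord_sum n (I : finType) (a : I -> R) (q : I -> 'rV[R]_n) j :
  coord (\sum_i a i *: q i) j = \sum_i a i * coord (q i) j.
Proof.
rewrite /coord; case: insubP => [i _ _|_] /=.
  by rewrite summxE; apply: eq_bigr => k _; rewrite mxE.
by rewrite big1 // => k _; rewrite mulr0.
Qed.

Lemma hmat_sum n (f : 'I_n.+1 -> 'rV[R]_n) (b : nat -> R) r :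
  \sum_c hmat f r c * b c = affP n b (f r).
Proof.
rewrite big_ord_recl /affP !mxE /= mul1r; congr (_ + _).
by apply: eq_bigr => j _; rewrite !mxE /= mulrC.
Qed.

Lemma sign_nn n : (-1) ^+ (n + n)%N = 1 :> R.
Proof. by rewrite exprD -exprMn mulrNN mulr1 expr1n. Qed.

Lemma colop n (M : 'M[R]_n.+1) (b : nat -> R) (i : 'I_n.+1) t :
  (forall r, \sum_c M r c * b c = if r == i then t else 0) ->
  b n * \det M = t * cofactor M i ord_max.
Proof.
move=> H.
pose B : 'M[R]_n.+1 := \matrix_(r, c) if c == ord_max then b r else (r == c)%:R.
have dB : \det B = b n.
  rewrite (expand_det_row _ ord_max) (bigD1 ord_max) //= big1 => [|c hc].
    rewrite !mxE eqxx addr0 /cofactor sign_nn mul1r.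
    have -> : row' ord_max (col' ord_max B) = 1%:M.
      apply/matrixP => r c; rewrite !mxE.
      have -> : (lift ord_max c == ord_max) = false.
        by apply/negbTE; rewrite eq_sym neq_lift.
      by rewrite (inj_eq (@lift_inj _ ord_max)).
    by rewrite det1 mulr1.
  rewrite !mxE (negbTE hc); case: eqP => [e|]; last by rewrite mul0r.
  by move: hc; rewrite -e eqxx.
have eMB : forall r c, (M *m B) r c = if c == ord_max then (if r == i then t else 0) else M r c.
  move=> r c; rewrite !mxE; case: ifP => hc.
    by rewrite -H; apply: eq_bigr => j _; rewrite mxE hc.
  rewrite (bigD1 c) //= big1 => [|j hj]; first by rewrite mxE hc eqxx mulr1 addr0.
  by rewrite mxE hc (negbTE hj) mulr0.
have := det_mulmx M B; rewrite dB (expand_det_col (M *m B) ord_max) (bigD1 i) //= big1.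
  rewrite eMB !eqxx addr0 [\det M * _]mulrC => <-; congr (_ * _).
  rewrite /cofactor; congr (_ * \det _); apply/matrixP => r c.
  move: (eMB (lift i r) (lift ord_max c)); rewrite !mxE => ->.
  by have -> : (lift ord_max c == ord_max) = false by apply/negbTE; rewrite eq_sym neq_lift.
by move=> r hr; rewrite eMB eqxx (negbTE hr) mul0r.
Qed.

Lemma aff_det0 n (U : seq 'rV[R]_n) (f : 'I_n.+1 -> 'rV[R]_n) :
  (size U <= n)%N -> (forall r, in_aff U (f r)) -> \det (hmat f) = 0.
Proof.
move=> hs hf; have [L hL] := fin_all_exists hf.
pose Lm : 'M[R]_(n.+1, size U) := \matrix_(r, i) L r i.
pose Um : 'M[R]_(size U, n.+1) := \matrix_(i, c) if c == 0 :> nat then 1 else coord (U`_i) c.-1.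
have e : hmat f = Lm *m Um.
  apply/matrixP => r c; rewrite !mxE; have [h1 h2] := hL r.
  under eq_bigr do rewrite !mxE.
  case hc: (c == 0 :> nat).
    by rewrite -{1}h1; apply: eq_bigr => i _; rewrite mulr1.
  by move: h2 => /= ->; rewrite coord_sum.
apply/eqP; apply: contraT => hd.
have : Lm *m Um \in unitmx by rewrite unitmxE unitfE -e.
rewrite -row_free_unit /row_free => /eqP hr.
have := leq_trans (mxrankM_maxl Lm Um) (rank_leq_col Lm).
by rewrite hr => h; move: (leq_trans h hs); rewrite ltnn.
Qed.

Lemma in_aff_mem n (U : seq 'rV[R]_n) u : u \in U -> in_aff U u.
Proof.
move=> hu; exists (fun i => ((i : nat) == index u U)%:R).
have hi : (index u U < size U)%N by rewrite index_mem.
split.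
  rewrite (bigD1 (Ordinal hi)) //= big1 => [|i hi']; first by rewrite eqxx addr0.
  by case: eqP => // e; move: hi'; rewrite -val_eqE /= e eqxx.
rewrite (bigD1 (Ordinal hi)) //= big1 => [|i hi'].
  by rewrite eqxx scale1r addr0 nth_index.
by case: eqP => [e|_]; [move: hi'; rewrite -val_eqE /= e eqxx | rewrite scale0r].
Qed.

Lemma hmat_inj n (f : 'I_n.+1 -> 'rV[R]_n) : \det (hmat f) != 0 -> injective f.
Proof.
move=> hd a b e; apply/eqP; apply: contraT => hab.
by move: hd; rewrite (determinant_alternate hab) ?eqxx // => c; rewrite !mxE e.
Qed.

Lemma notconv n (f : 'I_n.+1 -> 'rV[R]_n) : \det (hmat f) != 0 ->
  forall i, ~ in_conv [seq q <- [seq f j | j <- enum 'I_n.+1] | q != f i] (f i).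
Proof.
move=> hd i [l [_ [hs hx]]].
set S' := [seq q <- _ | _] in l hs hx.
move/eqP: hd; apply; apply: (@aff_det0 _ S').
  rewrite size_filter.
  have := count_predC (fun q => q != f i) [seq f j | j <- enum 'I_n.+1].
  have : has (predC (fun q => q != f i)) [seq f j | j <- enum 'I_n.+1].
    by apply/hasP; exists (f i); [apply: map_f; rewrite mem_enum | rewrite /= eqxx].
  rewrite has_count size_map size_enum_ord.
  move: (count (predC _) _) => b; move: (count _ _) => a; lia.
move=> r; case: (eqVneq (f r) (f i)) => [->|hr]; first by exists l.
by apply: in_aff_mem; rewrite mem_filter hr map_f // mem_enum.
Qed.

Lemma inord_lift_max n (r : 'I_n.+1) : (inord (lift ord_max r) : 'I_n.+1) = r.
Proof. apply: val_inj => /=. rewrite /bump leqNgt ltn_ord add0n. rewrite inordK //. Qed.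
Lemma lift_max_lt n (r : 'I_n.+1) : (lift ord_max r < n.+1)%N.
Proof. by rewrite lift_max. Qed.

Lemma lt_pred (r m : nat) : (r < m.+1)%N -> (r == 0)%N = false -> (r.-1 < m)%N.
Proof. lia. Qed.

Lemma lemA m (U : seq 'rV[R]_m.+1) : size U = m.+1 ->
  (forall y : 'rV[R]_m,
     (exists x, in_aff U x /\ integral_pt x /\ proj x = y) <-> integral_pt y) ->
  exists b : nat -> int, b m.+1 = 1 /\
    forall u, u \in U -> affP m.+1 (fun j => (b j)%:~R) u = 0.
Proof.
move=> hs hb.
pose yv (i : 'I_m.+1) : 'rV[R]_m := \row_(c < m) (if c.+1 == i :> nat then 1 else 0).
have hy : forall i, exists x, in_aff U x /\ integral_pt x /\ proj x = yv i.
  move=> i; apply/hb => c; exists (if c.+1 == i :> nat then 1 else 0); rewrite mxE.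
  by case: ifP => _; rewrite ?mulr1z ?mulr0z.
have [x hx] := fin_all_exists hy.
have hz : forall i, exists z : int, x i 0 ord_max = z%:~R.
  by move=> i; have [_ [hi _]] := hx i; exact: hi.
have [z hz'] := fin_all_exists hz.
pose b (n : nat) : int := if n == 0%N then - z ord0 else if (n < m.+1)%N
  then z ord0 - z (inord n) else if n == m.+1 then 1 else 0.
have bm : b m.+1 = 1 by rewrite /b /= ltnn eqxx.
have b0 : b 0%N = - z ord0 by [].
have bj : forall j, (j < m)%N -> b j.+1 = z ord0 - z (inord j.+1).
  by move=> j hj; rewrite /b /= ltnS hj.
have hc : forall i (j : nat), (j < m)%N -> coord (x i) j = if j.+1 == i :> nat then 1 else 0.
  move=> i j hj; have [_ [_ hp]] := hx i.
  have -> : j = widen_ord (leqnSn m) (Ordinal hj) by [].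
  rewrite coord_ord; have := congr1 (fun y : 'rV[R]_m => y 0 (Ordinal hj)) hp.
  by rewrite /proj !mxE.
have hl : forall i, coord (x i) m = (z i)%:~R.
  by move=> i; rewrite -hz' -(coord_ord (x i) ord_max).
have hxz : forall i, affP m.+1 (fun j => (b j)%:~R) (x i) = 0.
  move=> i; rewrite /affP big_ord_recr /= hl bm b0.
  under eq_bigr => j _ do rewrite bj // hc //.
  case: (posnP i) => [i0|ip].
    rewrite big1 => [|j _]; last by rewrite i0 mulr0.
    have -> : i = ord0 by apply: val_inj.
    ring.
  have him : (i.-1 < m)%N by move: (ltn_ord i); lia.
  rewrite (bigD1 (Ordinal him)) //= big1 => [|j hj].
    have -> : i.-1.+1 = i by lia.
    rewrite eqxx mulr1 addr0.
    have -> : (inord i : 'I_m.+1) = i by apply: val_inj; rewrite /= inordK.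
    rewrite mul1r; ring.
  case: eqP => [e|_]; last by rewrite mulr0.
  by move: hj; rewrite -val_eqE /= -e /= eqxx.
exists b; split => // u hu.
pose g (r : 'I_m.+2) : 'rV[R]_m.+1 := if (r < m.+1)%N then x (inord r) else u.
have : (fun j => (b j)%:~R : R) m.+1 * \det (hmat g) =
   affP m.+1 (fun j => (b j)%:~R) u * cofactor (hmat g) ord_max ord_max.
  apply: (colop (M:=hmat g) (b:=fun j => (b j)%:~R) (i:=ord_max) (t:=affP m.+1 (fun j => (b j)%:~R) u)) => r.
  rewrite (hmat_sum g (fun j => (b j)%:~R)) /g; case: (eqVneq r ord_max) => [->|hr].
    by rewrite ltnn.
  have -> : (r < m.+1)%N.
    by move: hr (ltn_ord r); rewrite -val_eqE /=; lia.
  by rewrite hxz.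
have -> : \det (hmat g) = 0.
  apply: (@aff_det0 _ U); first by rewrite hs.
  by move=> r; rewrite /g; case: ifP => _; [have [] := hx (inord r) | apply: in_aff_mem].
rewrite mulr0 /cofactor sign_nn mul1r det_trig.
  rewrite big1 ?mulr1 // => r _; rewrite !mxE /g lift_max_lt inord_lift_max lift_max /=.
  case: ifP => // hr0.
  have hr' : (r < m.+1)%N := ltn_ord r.
  rewrite hc; last by apply: lt_pred.
  by rewrite prednK ?eqxx // lt0n hr0.
apply/is_trig_mxP => r c hrc; rewrite !mxE /g lift_max_lt inord_lift_max !lift_max /=.
case: ifP => hc0; first by move: hrc; rewrite (eqP hc0) ltn0.
have hc' : (c < m.+1)%N := ltn_ord c.
rewrite hc; last by apply: lt_pred.
by rewrite prednK ?lt0n ?hc0 //; case: eqP => // e; move: hrc; rewrite e ltnn.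
Qed.

End Gen.

Section Spec.
Variable R : realFieldType.
Variable d : nat.
Variable v : 'I_d.+1 -> 'rV[R]_d.
Variable s : 'S_d.

Definition P k (r : nat) : 'rV[R]_d := if (r < k)%N then vsig v s r else v ord_max.
Definition Tf k (r : 'I_k.+1) : 'rV[R]_k := trunc k (P k r).
Arguments Tf : clear implicits.
Definition T k := [seq Tf k j | j <- enum 'I_k.+1].

Lemma Xmat_hmat k : Xmat v s k = hmat (Tf k).
Proof.
apply/matrixP => r c; rewrite !mxE; case: ifP => // hc.
rewrite /Tf coord_trunc //; have := ltn_ord c; move: hc; lia.
Qed.

Lemma Xsum k (b : nat -> R) r : \sum_c Xmat v s k r c * b c = affP k b (P k r).
Proof. by rewrite Xmat_hmat hmat_sum /Tf affP_trunc. Qed.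

Lemma cof_max k : cofactor (Xmat v s k) ord_max ord_max = \det (Ymat v s k).
Proof.
rewrite /cofactor sign_nn mul1r; congr (\det _); apply/matrixP => r c.
by rewrite !mxE !lift_max ltn_ord.
Qed.

Lemma cof_k k : cofactor (Xmat v s k.+1) (inord k) ord_max = - \det (Xmat v s k).
Proof.
rewrite /cofactor.
have -> : ((-1) ^+ ((inord k : 'I_k.+2) + (ord_max : 'I_k.+2))%N : R) = -1.
  by rewrite inordK // addnS exprS sign_nn mulr1.
rewrite mulN1r; congr (- \det _); apply/matrixP => r c.
rewrite !mxE lift_max /= /bump inordK //.
have hr := ltn_ord r.
case: (ltnP r k) => hrk.
  by rewrite add0n ltnS ltnW.
by rewrite /= ltnS ltnNge hrk.
Qed.

Lemma P_lift k (j : 'I_k.+1) : P k.+1 (lift (inord k) j) = P k j.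
Proof.
rewrite /P /= /bump inordK //; have hj := ltn_ord j.
case: (ltnP j k) => hjk.
  by rewrite /= ltnS ltnW.
by rewrite /= ltnS ltnNge hjk.
Qed.

Lemma proj_trunc k (p : 'rV[R]_d) : proj (trunc k.+1 p) = trunc k p.
Proof. by apply/rowP => i; rewrite /proj !mxE. Qed.

Lemma lift_max' n (j : 'I_n) : (@lift n.+1 ord_max j : nat) = j.
Proof. by rewrite /= /bump leqNgt ltn_ord. Qed.

Lemma trunc_id (p : 'rV[R]_d) : trunc d p = p.
Proof. by apply/rowP => i; rewrite mxE coord_ord. Qed.

Lemma P_max k : P k k = v ord_max.
Proof. by rewrite /P ltnn. Qed.

Definition Q k := \det (Xmat v s k) != 0 /\
  exists S : seq 'rV[R]_k, lattice_face S /\ {subset T k <= S}.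
Definition B k := forall i : 'I_k.+1, exists b : nat -> int, b k = 1 /\
  forall r : 'I_k.+1, r != i -> affP k (fun j => (b j)%:~R) (P k r) = 0.

Lemma Tf_inj k : \det (Xmat v s k) != 0 -> injective (Tf k).
Proof. by rewrite Xmat_hmat; apply: hmat_inj. Qed.

Lemma drop_props k (i : 'I_k.+1) : \det (Xmat v s k) != 0 ->
  uniq [seq Tf k (lift i j) | j <- enum 'I_k] /\
  size [seq Tf k (lift i j) | j <- enum 'I_k] = k /\
  {subset [seq Tf k (lift i j) | j <- enum 'I_k] <= T k}.
Proof.
move=> hX; split; last split.
- rewrite map_inj_uniq ?enum_uniq // => a b /(Tf_inj hX) /lift_inj //.
- by rewrite size_map size_enum_ord.
- by move=> x /mapP [j _ ->]; apply: map_f; rewrite mem_enum.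
Qed.

Lemma B_hi n : Q n.+2 -> B n.+2.
Proof.
move=> [hX [S [hS hsub]]] i; move: hS => /= [_ hS].
have [hu [hsz hsU]] := drop_props i hX.
have [_ hb] := hS _ hu hsz (fun x hx => hsub x (hsU x hx)).
have [b [bm hb0]] := lemA hsz hb.
exists b; split => // r hr.
case: (unliftP i r) => [j ->|e]; last by move: hr; rewrite e eqxx.
rewrite -affP_trunc; apply: hb0; apply/mapP; exists j => //; exact: mem_enum.
Qed.

Lemma B_one : Q 1 -> B 1.
Proof.
move=> [hX [S [hS hsub]]] i; move: hS => /= [_ [_ hint]].
have hin : Tf 1 (lift i ord0) \in S.
  by apply: hsub; apply: map_f; rewrite mem_enum.
have [z hz] := hint _ hin ord0.
exists (fun n => if n == 0%N then - z else if n == 1%N then 1 else 0); split => // r hr.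
case: (unliftP i r) => [j ->|e]; last by move: hr; rewrite e eqxx.
have -> : j = ord0 := ord1 j.
rewrite -affP_trunc /affP big_ord1 /=.
have -> : coord (trunc 1 (P 1 (lift i ord0))) 0 = z%:~R.
  by rewrite -hz -(coord_ord _ ord0).
by rewrite intrN mul1r addNr.
Qed.

Lemma step n : Q n.+2 -> Q n.+1.
Proof.
move=> hQ; have hB := B_hi hQ.
move: hQ => [hX [S [hS hsub]]]; move: hS => /= [_ hS].
pose i : 'I_n.+3 := inord n.+1.
have [hu [hsz hsU]] := drop_props i hX.
have [ha _] := hS _ hu hsz (fun x hx => hsub x (hsU x hx)).
have [b [bm hb0]] := hB i.
have hX1 : \det (Xmat v s n.+1) != 0.
  have : (fun j => (b j)%:~R : R) n.+2 * \det (Xmat v s n.+2) =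
     affP n.+2 (fun j => (b j)%:~R) (P n.+2 i) * cofactor (Xmat v s n.+2) i ord_max.
    apply: (colop (M:=Xmat v s n.+2) (b:=fun j => (b j)%:~R) (i:=i)) => r.
    rewrite (Xsum (fun j => (b j)%:~R)); case: (eqVneq r i) => [->|hr]; first by [].
    exact: hb0.
  rewrite /= bm mul1r cof_k => e; apply: contraNneq hX => h0.
  by rewrite e h0 oppr0 mulr0.
have hmap : map (@proj R n.+1) [seq Tf n.+2 (lift i j) | j <- enum 'I_n.+2] = T n.+1.
  rewrite -map_comp; apply: eq_map => j /=.
  by rewrite /Tf P_lift proj_trunc.
split => //; exists (T n.+1); split => //; apply: ha; rewrite hmap; split.
  by rewrite map_inj_uniq ?enum_uniq //; apply: Tf_inj.
move=> p; split => [hp|[]] //; split => //.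
move: hp => /mapP [j _ ->].
by apply: notconv; rewrite -Xmat_hmat.
Qed.

Lemma Q_top : aff_indep v -> lattice_face [seq v i | i <- enum 'I_d.+1] -> Q d.
Proof.
move=> hA hL.
pose tau : {perm 'I_d.+1} := lift_perm ord_max ord_max s.
have hP : forall r : 'I_d.+1, P d r = v (tau r).
  move=> r; case: (ltnP r d) => hr.
    have -> : r = lift ord_max (Ordinal hr).
      by apply: val_inj; rewrite /= /bump leqNgt hr.
    rewrite /tau lift_perm_lift /P lift_max' /= hr /vsig.
    case: insubP => [j _ hj|]; last by rewrite hr.
    have -> : j = Ordinal hr by apply: val_inj.
    by congr (v _); apply: val_inj; rewrite /= /bump leqNgt ltn_ord.
  have -> : r = ord_max by apply: val_inj; apply/eqP; rewrite eqn_leq hr -ltnS ltn_ord.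
  by rewrite /tau lift_perm_id P_max.
split.
  have -> : Xmat v s d = row_perm tau (\matrix_(i < d.+1, j < d.+1)
          if j == 0 :> nat then 1 else coord (v i) j.-1).
    by apply/matrixP => r c; rewrite !mxE -hP.
  by rewrite row_permE det_mulmx det_perm mulf_neq0 ?signr_eq0.
exists [seq v i | i <- enum 'I_d.+1]; split => // x /mapP [j _ ->].
by rewrite /Tf trunc_id hP; apply: map_f; rewrite mem_enum.
Qed.

Lemma affP_subz k (a c : nat -> int) (p : 'rV[R]_d) :
  affP k (fun j => (a j - c j)%:~R) p =
  affP k (fun j => (a j)%:~R) p - affP k (fun j => (c j)%:~R) p.
Proof.
rewrite /affP intrB; under eq_bigr do rewrite intrB mulrBl.
rewrite sumrB; ring.
Qed.

Lemma affP_last0 k (b : nat -> R) (p : 'rV[R]_d) :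
  b k.+1 = 0 -> affP k.+1 b p = affP k b p.
Proof. by move=> h; rewrite /affP big_ord_recr /= h mul0r addr0. Qed.

Lemma ratio (X Y X' Y' A : R) (lam : int) : X = A * Y -> lam%:~R * X' = A * Y' ->
  exists m : int, X / Y / (X' / Y') = m%:~R.
Proof.
move=> e1 e2.
have [->|hY] := eqVneq Y 0; first by exists 0; rewrite invr0 mulr0 mul0r.
rewrite e1 mulfK //.
have [->|hY'] := eqVneq Y' 0; first by exists 0; rewrite invr0 mulr0 invr0 mulr0.
have [hl|hl] := eqVneq lam 0.
  move: e2; rewrite hl mul0r => /esym /eqP; rewrite mulf_eq0 (negbTE hY') orbF.
  by move=> /eqP ->; exists 0; rewrite mul0r.
have hl' : (lam%:~R : R) != 0 by rewrite intr_eq0.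
have -> : X' = A * Y' / lam%:~R by rewrite -e2 mulrC mulKf.
have [->|hA] := eqVneq A 0; first by exists 0; rewrite !mul0r.
by exists lam; field; rewrite hY' hl' hA.
Qed.

Lemma final n : B n.+1 -> exists m : int, zfun v s n.+1 / zfun v s n = m%:~R.
Proof.
move=> hB.
have [bH [bHm hH]] := hB ord_max; have [bG [bGm hG]] := hB (inord n).
set tH := affP n.+1 (fun j => (bH j)%:~R) (v ord_max).
have eX : \det (Xmat v s n.+1) = tH * \det (Ymat v s n.+1).
  have : (fun j => (bH j)%:~R : R) n.+1 * \det (Xmat v s n.+1) =
     tH * cofactor (Xmat v s n.+1) ord_max ord_max.
    apply: (colop (M:=Xmat v s n.+1) (b:=fun j => (bH j)%:~R) (i:=ord_max)) => r.
    rewrite (Xsum (fun j => (bH j)%:~R)); case: (eqVneq r ord_max) => [->|hr]; first by rewrite P_max.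
    exact: hH.
  by rewrite /= bHm mul1r cof_max.
have tG0 : affP n.+1 (fun j => (bG j)%:~R) (v ord_max) = 0.
  rewrite -(P_max n.+1); apply: (hG ord_max).
  by rewrite -val_eqE /= inordK // neq_ltn ltnSn orbT.
have etH : tH = affP n (fun j => (bH j - bG j)%:~R) (v ord_max).
  rewrite -affP_last0; last by rewrite bHm bGm subrr.
  by rewrite affP_subz tG0 subr0.
clear hB; case: n bH bG bHm bGm hH hG tH eX tG0 etH => [|n] bH bG bHm bGm hH hG tH eX tG0 etH.
  rewrite /zfun divr1.
  have [hY|hY] := eqVneq (\det (Ymat v s 1)) 0.
    by exists 0; rewrite hY invr0 mulr0.
  exists (bH 0%N - bG 0%N); rewrite eX mulfK // etH /affP big_ord0 addr0.
  done.
have eX' : (bH n.+1 - bG n.+1)%:~R * \det (Xmat v s n.+1) = tH * \det (Ymat v s n.+1).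
  rewrite -cof_max.
  apply: (colop (M:=Xmat v s n.+1) (b:=fun j => (bH j - bG j)%:~R) (i:=ord_max)) => r.
  rewrite (Xsum (fun j => (bH j - bG j)%:~R)); case: (eqVneq r ord_max) => [->|hr]; first by rewrite P_max etH.
  have hrn : (r < n.+1)%N by move: hr (ltn_ord r); rewrite -val_eqE /=; lia.
  pose r2 : 'I_n.+3 := widen_ord (leqnSn _) r.
  have hP2 : P n.+1 r = P n.+2 r2 by rewrite /P /= hrn (ltn_trans hrn).
  rewrite hP2 -affP_last0; last by rewrite bHm bGm subrr.
  rewrite affP_subz hH ?hG ?subr0 //.
    by rewrite -val_eqE /= inordK // neq_ltn ltnS (ltnW hrn).
  by rewrite -val_eqE /= neq_ltn (ltn_trans hrn).
rewrite /zfun; exact: ratio eX eX'.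
Qed.

End Spec.

Theorem mainTheorem10 (R : realFieldType) (d : nat) (v : 'I_d.+1 -> 'rV[R]_d) :
  (1 <= d)%N ->
  aff_indep v ->
  lattice_face [seq v i | i <- enum 'I_d.+1] ->
  forall (s : 'S_d) (k : nat), (1 <= k <= d)%N ->
    exists m : int, zfun v s k / zfun v s k.-1 = m%:~R.
Proof.
move=> hd hA hL s k /andP [hk1 hkd].
have hQ : forall j, (j < d)%N -> Q v s (d - j)%N.
  elim => [_|j IH hj]; first by rewrite subn0; apply: Q_top.
  have e1 : (d - j = (d - j.+2).+2)%N by lia.
  have e2 : (d - j.+1 = (d - j.+2).+1)%N by lia.
  have := IH (ltnW hj); rewrite e1 e2; exact: step.
have hQk : Q v s k.
  by have := hQ (d - k)%N ltac:(lia); rewrite subKn.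
case: k hk1 hkd hQk => [//|n] _ _ hQk.
apply: final; case: n hQk => [|n] hQk; [exact: B_one | exact: B_hi].
Qed.
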